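(* Let $f\in C([t_+,\infty)\times \mathbb{R}^n,\mathbb{R}^m)$ have a partial derivative $\frac{\partial f}{\partial x}\in C([t_+,\infty)\times \mathbb{R}^n, \mathrm{L}(\mathbb{R}^n,\mathbb{R}^m))$, and suppose that for every fixed $t_*$, $x_*=x_{s_1}^*+x_{s_2}^*+x_{p_1}^*+x_{p_2}^*$ with $(t_*,x_* )\in L_{t_+}$ and $x_{s_2}^*\in D_{s_2}$ the operator $\Phi_{t_*,x_*}=\left[\frac{\partial Q_2f}{\partial x}(t_*,x_* )- B\right] P_2\colon X_2\to Y_2$ is invertible. Then: (i) $f$ satisfies locally a Lipschitz condition with respect to $x$ on $[t_+,\infty)\times\mathbb{R}^n$; and (ii) for every such $(t_*,x_* )$ there exist a neighborhood $U_\delta(t_*,x_{s_1}^*,x_{s_2}^*,x_{p_1}^* )=U_{\delta_1}(t_* )\times U_{\delta_2}(x_{s_1}^* )\times U_{\delta_3}(x_{s_2}^* )\times U_{\delta_4}(x_{p_1}^* )$ (where $U_{\delta_3}(x_{s_2}^* )\subseteq D_{s_2}$ may be closed), a neighborhood $U_\varepsilon(x_{p_2}^* )$ and an invertible operator $\Phi_{t_*,x_*}\in\mathrm{L}(X_2,Y_2)$ (namely the operator above) such that for all $(t,x_{s_1},x_{s_2},x_{p_1})\in U_\delta(t_*,x_{s_1}^*,x_{s_2}^*,x_{p_1}^* )$ and $x_{p_2}^1,x_{p_2}^2\in U_\varepsilon(x_{p_2}^* )$ the mapping $\widetilde{\Psi}(t,x_{s_1},x_{s_2},x_{p_1},x_{p_2}):=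 Q_2f(t,x_{s_1}+x_{s_2}+x_{p_1}+x_{p_2})-B\big|_{X_2}x_{p_2}$ satisfies $\|\widetilde{\Psi}(t,x_{s_1},x_{s_2},x_{p_1},x_{p_2}^1)- \widetilde{\Psi}(t,x_{s_1},x_{s_2},x_{p_1},x_{p_2}^2)-\Phi_{t_*,x_*} [x_{p_2}^1-x_{p_2}^2]\|\le c\|x_{p_2}^1-x_{p_2}^2\|$ with $c=c(\delta,\varepsilon)$ satisfying $\lim_{\delta,\varepsilon\to 0} c(\delta,\varepsilon)<\|\Phi_{t_*,x_*}^{-1}\|^{-1}$. Consequently, whenever the hypotheses of the global-solvability theorem with the differentiability/invertibility assumption hold, the hypotheses of the global-solvability theorem with the local-Lipschitz/contraction assumption (ii) also hold, since all their remaining hypotheses coincide.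
   Context: Consider the DAE $\frac{d}{dt}[Ax]+Bx=f(t,x)$, $t\in[t_+,\infty)$, $x\in\mathbb{R}^n$, with $A,B\in\mathrm{L}(\mathbb{R}^n,\mathbb{R}^m)$ forming a singular pencil $\lambda A+B$ whose regular block has index at most 1. There are direct decompositions $\mathbb{R}^n=X_{s_1}\dot+X_{s_2}\dot+X_1\dot+X_2$, $\mathbb{R}^m=Y_{s_1}\dot+Y_{s_2}\dot+Y_1\dot+Y_2$ with corresponding projectors $S_i\colon\mathbb{R}^n\to X_{s_i}$, $P_i\colon\mathbb{R}^n\to X_i$, $F_i\colon\mathbb{R}^m\to Y_{s_i}$, $Q_i\colon\mathbb{R}^m\to Y_i$ ($i=1,2$), and every $x\in\mathbb{R}^n$ is written $x=x_{s_1}+x_{s_2}+x_{p_1}+x_{p_2}$ with $x_{s_i}=S_ix$, $x_{p_i}=P_ix$. $L_{t_+}=\{(t,x)\in[t_+,\infty)\times\mathbb{R}^n\mid (F_2+Q_2)[Bx-f(t,x)]=0\}$, and $D_{s_2}\subset X_{s_2}$ is a given set. The two global-solvability theorems share the remaining hypotheses (unique solvability of the constraint for $x_{p_2}$ and the Lyapunov-type function condition) and differ only in the hypothesis given in the claim as the assumption versus (ii). *)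

(* Defs.v *)
(* Vectors of R^n are row vectors 'rV[R]_n; a linear map R^n -> R^m is a
   matrix M : 'M[R]_(n,m) acting by x |-> x *m M (row-vector convention).
   Projectors are square matrices acting the same way. *)
From HB Require Import structures.
From mathcomp Require Import all_boot all_order all_algebra.
From mathcomp Require Import all_classical all_reals all_analysis.
Set Implicit Arguments. Unset Strict Implicit. Unset Printing Implicit Defensive.
Import Order.TTheory GRing.Theory Num.Theory.
Import numFieldNormedType.Exports.
Local Open Scope classical_set_scope.
Local Open Scope ring_scope.

Definition direct_decomp4 (R : realType) (k : nat) (P1 P2 P3 P4 : 'M[R]_k) :=
  [/\ P1 + P2 + P3 + P4 = 1%:M,
      [/\ P1 *m P1 = P1, P2 *m P2 = P2, P3 *m P3 = P3 & P4 *m P4 = P4]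
    & forall i j : 'I_4, i != j ->
        (nth 0 [:: P1; P2; P3; P4] i) *m (nth 0 [:: P1; P2; P3; P4] j) = 0].

Definition range_proj (R : realType) (k : nat) (P : 'M[R]_k) : set 'rV[R]_k :=
  [set x | x *m P = x].

(* Phi : 'M_(n,m) restricted to X = range P is an invertible operator X -> Y
   (Y = range Q): it maps X into Y and is bijective from X onto Y. *)
Definition invertible_between (R : realType) (n m : nat)
    (P : 'M[R]_n) (Q : 'M[R]_m) (Phi : 'M[R]_(n, m)) :=
  (forall x, range_proj P x -> range_proj Q (x *m Phi)) /\
  (forall y, range_proj Q y ->
     exists x, [/\ range_proj P x, x *m Phi = y &
                   forall x', range_proj P x' -> x' *m Phi = y -> x' = x]).

(* operator norm of the inverse (Phi|_X)^{-1} : Y -> X, i.e.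
   sup { ||Phi^{-1} y|| : y in Y, ||y|| <= 1 }
 = sup { ||x|| : x in X, ||Phi x|| <= 1 }. *)
Definition inv_opnorm (R : realType) (n m : nat)
    (P : 'M[R]_n) (Phi : 'M[R]_(n, m)) : R :=
  sup [set `|x| | x in [set x : 'rV[R]_n | range_proj P x /\ `|x *m Phi| <= 1]].

Definition loc_lipschitz_x (R : realType) (n m : nat) (tp : R)
    (f : R -> 'rV[R]_n -> 'rV[R]_m) :=
  forall (t0 : R) (x0 : 'rV[R]_n), tp <= t0 ->
    exists r : R, 0 < r /\ exists L : R,
      forall (t : R) (x1 x2 : 'rV[R]_n), tp <= t -> `|t - t0| < r ->
        `|x1 - x0| < r -> `|x2 - x0| < r ->
        `|f t x1 - f t x2| <= L * `|x1 - x2|.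

Definition is_partial_deriv_x (R : realType) (n m : nat) (tp : R)
    (f : R -> 'rV[R]_n -> 'rV[R]_m) (Df : R -> 'rV[R]_n -> 'M[R]_(n, m)) :=
  forall (t : R) (x : 'rV[R]_n), tp <= t ->
    differentiable (f t) x /\
    ('d (f t) x : 'rV[R]_n -> 'rV[R]_m) = (fun h => h *m Df t x).

(* Main.v *)
Require Import Defs.
From HB Require Import structures.
From mathcomp Require Import all_boot all_order all_algebra.
From mathcomp Require Import all_classical all_reals all_analysis.
From mathcomp Require Import ring lra.
Set Implicit Arguments. Unset Strict Implicit. Unset Printing Implicit Defensive.
Import Order.TTheory GRing.Theory Num.Theory.
Import numFieldNormedType.Exports.
Local Open Scope classical_set_scope.
Local Open Scope ring_scope.

Lemma cont_eps (R : realType) n (V : normedModType R) (F : R * 'rV[R]_n -> V) tp (p : R * 'rV[R]_n) :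
  {within [set q : R * 'rV[R]_n | tp <= q.1], continuous F} -> tp <= p.1 ->
  forall eta, 0 < eta -> exists2 del, 0 < del & forall t x, tp <= t -> `|t - p.1| < del -> `|x - p.2| < del -> `|F (t,x) - F p| < eta.
Proof.
move=> /subspace_continuousP cF hp eta eta0.
move: (cF p hp) => /cvgr_distC_lt /(_ eta eta0).
rewrite near_withinE => /nbhs_ballP [del del0 H].
exists del => // t x ht h1 h2.
apply: (H (t, x)) => //.
split; rewrite /= -ball_normE /= distrC //.
Qed.

Lemma mvt_coord (R : realType) n m (g : 'rV[R]_n -> 'rV[R]_m)
  (D : 'rV[R]_n -> 'M[R]_(n, m)) (x1 x2 : 'rV[R]_n) (j : 'I_m) :
  (forall s : R, 0 <= s <= 1 ->
     differentiable g (x2 + s *: (x1 - x2)) /\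
     ('d g (x2 + s *: (x1 - x2)) : 'rV[R]_n -> 'rV[R]_m)
        = (fun h => h *m D (x2 + s *: (x1 - x2)))) ->
  exists s : R, 0 <= s <= 1 /\
    (g x1 - g x2) 0 j = ((x1 - x2) *m D (x2 + s *: (x1 - x2))) 0 j.
Proof.
move=> Hd.
set h := x1 - x2.
pose xi := fun s : R => x2 + s *: h.
have dxi s : differentiable xi s /\ ('d xi s : R -> 'rV[R]_n) = ( *:%R^~ h).
  have -> : xi = cst x2 + *:%R^~ h by apply/funext => u.
  have I := is_diffD (is_diff_cst x2 s) (is_diff_scalel s h).
  case: I => I1 I2; split; first exact: I1.
  by rewrite I2 add0r.
have @cl : {linear 'rV[R]_m -> R}.
  by exists (fun N : 'rV[R]_m => N 0 j); do 2![eexists]; do ?[constructor];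
     rewrite ?mxE// => ? *; rewrite ?mxE//; move=> ?; rewrite !mxE.
have clc : continuous cl by exact: coord_continuous.
pose psi := fun s => cl (g (xi s)).
have dpsi (s : R) : 0 <= s <= 1 -> differentiable psi s /\ 'd psi s 1 = (h *m D (xi s)) 0 j.
  move=> /Hd [dg dgv].
  have [dx dxv] := dxi s.
  have dgx : differentiable (g \o xi) s by apply: differentiable_comp.
  have -> : psi = cl \o (g \o xi) by [].
  split; first by apply: differentiable_comp => //; exact: linear_differentiable.
  rewrite diff_comp //; last exact: linear_differentiable.
  rewrite diff_lin // diff_comp // dxv /= dgv /= scale1r.
  by [].
have [c c01 Hc] : exists2 c, c \in `[0, 1]%R & psi 1 - psi 0 = (h *m D (xi c)) 0 j * (1 - 0).
  apply: MVT_segment => //.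
    move=> x; rewrite in_itv /= => /andP[y0 y1].
    have [dp dpv] := dpsi x (introT andP (conj (ltW y0) (ltW y1))).
    apply: DeriveDef; first exact: diff_derivable.
    by rewrite deriveE // dpv.
  apply/continuous_in_subspaceT => z /[1!inE] zA.
  apply/differentiable_continuous.
  by have [] := dpsi z; rewrite ?(itvP zA).
exists c; split; first by rewrite !(itvP c01).
move: Hc; rewrite subr0 mulr1 /psi /xi /= scale1r scale0r addr0 /h. rewrite (addrC x2) subrK => <-.
by rewrite !mxE.
Qed.

Section H.
Variable R : realType.

Lemma entry_le p q (M : 'M[R]_(p, q)) i j : `|M i j| <= `|M|.
Proof.
rewrite [leRHS]/Num.norm /= mx_normrE.
exact: (le_bigmax _ (fun ij : 'I_p * 'I_q => `|M ij.1 ij.2|) (i, j)).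
Qed.

Lemma norm_le_entries p q (M : 'M[R]_(p, q)) K : 0 <= K ->
  (forall i j, `|M i j| <= K) -> `|M| <= K.
Proof.
move=> K0 H; rewrite [leLHS]/Num.norm /= mx_normrE.
by apply/bigmax_leP; split => // -[i j] _; exact: H.
Qed.

Lemma mul_entry_bound n m (u : 'rV[R]_n) (M : 'M[R]_(n, m)) j :
  `|(u *m M) 0 j| <= n%:R * `|u| * `|M|.
Proof.
rewrite mxE.
apply: (le_trans (ler_norm_sum _ _ _)).
apply: (@le_trans _ _ (\sum_(k < n) `|u| * `|M|)).
  apply: ler_sum => k _; rewrite normrM.
  by apply: ler_pM => //; exact: entry_le.
by rewrite sumr_const card_ord -[_ *+ n]mulr_natl mulrA.
Qed.

Lemma mulmx_norm n m (u : 'rV[R]_n) (M : 'M[R]_(n, m)) :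
  `|u *m M| <= n%:R * `|u| * `|M|.
Proof.
apply: norm_le_entries; first by rewrite !mulr_ge0.
move=> i j; rewrite (ord1 i); exact: mul_entry_bound.
Qed.

Lemma convex_ball n (x0 x1 x2 : 'rV[R]_n) (s r : R) : 0 <= s <= 1 ->
  `|x1 - x0| < r -> `|x2 - x0| < r -> `|x2 + s *: (x1 - x2) - x0| < r.
Proof.
move=> /andP[s0 s1] h1 h2.
have -> : x2 + s *: (x1 - x2) - x0 = (1 - s) *: (x2 - x0) + s *: (x1 - x0).
  by apply/rowP => k; rewrite !mxE; ring.
apply: (le_lt_trans (ler_normD _ _)).
rewrite !normrZ !ger0_norm ?subr_ge0 //.
set a := `|x2 - x0|; set b := `|x1 - x0|.
have h3 : 0 <= (1 - s) * (r - a) by rewrite mulr_ge0 // subr_ge0 // ltW.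
have h4 : 0 <= s * (r - b) by rewrite mulr_ge0 // subr_ge0 // ltW.
have h5 : 0 < (1 - s) * (r - a) + s * (r - b).
  have [s1'|] := ltP s 1.
    by apply: ltr_pwDl => //; rewrite mulr_gt0 // subr_gt0.
  move=> s1''; have -> : s = 1 by apply/eqP; rewrite eq_le s1 s1''.
  by rewrite subrr mul0r add0r mul1r subr_gt0.
lra.
Qed.

End H.

Lemma mvt_bound (R : realType) n m (g : 'rV[R]_n -> 'rV[R]_m)
  (D : 'rV[R]_n -> 'M[R]_(n, m)) (A : 'M[R]_(n, m)) (x1 x2 : 'rV[R]_n) (K : R) :
  (forall s : R, 0 <= s <= 1 ->
     differentiable g (x2 + s *: (x1 - x2)) /\
     ('d g (x2 + s *: (x1 - x2)) : 'rV[R]_n -> 'rV[R]_m)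
        = (fun h => h *m D (x2 + s *: (x1 - x2)))) ->
  0 <= K ->
  (forall s : R, 0 <= s <= 1 -> `|D (x2 + s *: (x1 - x2)) - A| <= K) ->
  `|g x1 - g x2 - (x1 - x2) *m A| <= n%:R * K * `|x1 - x2|.
Proof.
move=> Hd K0 HK.
apply: norm_le_entries; first by rewrite !mulr_ge0.
move=> i j; rewrite (ord1 i).
have [s [s01 Hs]] := mvt_coord j Hd.
have -> : (g x1 - g x2 - (x1 - x2) *m A) 0 j =
    ((x1 - x2) *m (D (x2 + s *: (x1 - x2)) - A)) 0 j.
  by rewrite mulmxBr; move: Hs; rewrite !mxE => ->.
apply: (le_trans (mul_entry_bound _ _ _)).
have h := ler_wpM2l (mulr_ge0 (ler0n _ n) (normr_ge0 (x1 - x2))) (HK s s01).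
apply: le_trans h _; rewrite le_eqVlt; apply/orP; left; apply/eqP; ring.
Qed.

Lemma sup_props (R : realType) (E : set R) (K : R) :
  (exists y, E y) -> (forall y, E y -> y <= K) ->
  (forall y, E y -> y <= sup E) /\ sup E <= K.
Proof.
move=> [y0 Ey0] HK; split.
  by move=> y Ey; apply: (ub_le_sup (E:=E)) => //; exists K.
by apply: ge_sup; [exists y0 | ].
Qed.

Lemma inv_cases (R : realType) n m (P : 'M[R]_n) (Q : 'M[R]_m) (Phi : 'M[R]_(n, m)) :
  Q *m Q = Q -> invertible_between P Q Phi ->
  0 < inv_opnorm P Phi \/
  (inv_opnorm P Phi = 0 /\ forall y, range_proj P y -> y = 0).
Proof.
move=> QQ [Hmap Hinv].
case: (pselect (exists x, range_proj P x /\ x != 0)) => [[x [xP xn0]]|Hno]; last first.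
  have triv : forall y, range_proj P y -> y = 0.
    move=> y yP; apply/eqP; apply/negP => yn0.
    by apply: Hno; exists y; split => //; apply/negP.
  right; split => //.
  rewrite /inv_opnorm.
  have -> : [set `|x| | x in [set x : 'rV[R]_n | range_proj P x /\ `|x *m Phi| <= 1]]
           = [set 0].
    apply/seteqP; split => [_ [y [yP _] <-]|_ ->] /=.
      by rewrite (triv y yP) normr0.
    exists 0; last by rewrite normr0.
    by split; [rewrite /range_proj /= mul0mx | rewrite mul0mx normr0].
  exact: sup1.
left.
have rQ y : range_proj Q (y *m Q) by rewrite /range_proj /= -mulmxA QQ.
have [G HG] := choice (fun y => Hinv (y *m Q) (rQ y)).
have GP y : range_proj P (G y) by case: (HG y).
have GPhi y : G y *m Phi = y *m Q by case: (HG y).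
have Guniq y x' : range_proj P x' -> x' *m Phi = y *m Q -> x' = G y.
  by case: (HG y) => _ _; apply.
have GK x' : range_proj P x' -> G (x' *m Phi) = x'.
  move=> x'P; apply/esym/Guniq => //.
  by have := Hmap x' x'P; rewrite /range_proj /= => ->.
have Gadd y z : G (y + z) = G y + G z.
  apply/esym/Guniq.
    by rewrite /range_proj /= mulmxDl (GP y) (GP z).
  by rewrite [LHS]mulmxDl !GPhi mulmxDl.
have GZ (a : R) y : G (a *: y) = a *: G y.
  apply/esym/Guniq.
    by rewrite /range_proj /= -scalemxAl (GP y).
  by rewrite -scalemxAl GPhi scalemxAl.
have G0 : G 0 = 0 by rewrite -(scale0r 0) GZ scale0r.
pose CG := \sum_(j < m) `|G (delta_mx 0 j)|.
have CG0 : 0 <= CG by apply: sumr_ge0 => j _.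
have Gbound y : `|G y| <= `|y| * CG.
  rewrite {1}(row_sum_delta y) (big_morph G Gadd G0).
  apply: (le_trans (ler_norm_sum _ _ _)).
  rewrite /CG mulr_sumr; apply: ler_sum => j _.
  rewrite GZ normrZ; apply: ler_wpM2r => //.
  exact: entry_le.
pose E := [set `|x0| | x0 in [set x0 : 'rV[R]_n | range_proj P x0 /\ `|x0 *m Phi| <= 1]].
change (0 < sup E).
have Eub : forall y, E y -> y <= CG.
  move=> _ [y [yP yPhi] <-].
  rewrite -(GK y yP); apply: (le_trans (Gbound _)).
  by rewrite -[leRHS]mul1r; apply: ler_wpM2r.
have xPhin0 : x *m Phi != 0.
  apply/negP => /eqP x0; move: xn0; rewrite -(GK x xP) x0 G0.
  by rewrite eqxx.
set k := `|x *m Phi|^-1.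
have k0 : 0 < k by rewrite invr_gt0 normr_gt0.
have Ex' : E `|k *: x|.
  exists (k *: x) => //; split.
    by rewrite /range_proj /= -scalemxAl xP.
  rewrite -scalemxAl normrZ gtr0_norm // mulVf //.
  by rewrite normr_eq0.
have [supge _] := sup_props (ex_intro _ _ Ex') Eub.
apply: (lt_le_trans _ (supge _ Ex')).
by rewrite normrZ gtr0_norm // mulr_gt0 // normr_gt0.
Qed.

Lemma zid (R : realType) m (a b c d e : 'rV[R]_m) :
  a - d - (b - e) - (c - (d - e)) = a - b - c.
Proof. by apply/rowP => k; rewrite !mxE; ring. Qed.

Lemma decomp_id (R : realType) n (a b c y1 y2 a' b' c' w : 'rV[R]_n) (s : R) :
  (a + b + c + y2) + s *: ((a + b + c + y1) - (a + b + c + y2)) - (a' + b' + c' + w)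
  = (a - a') + (b - b') + (c - c') + (y2 + s *: (y1 - y2) - w).
Proof. by apply/rowP => k; rewrite !mxE; ring. Qed.

Theorem corollary1 (R : realType) (n m : nat) (B : 'M[R]_(n, m))
  (S1 S2 P1 P2 : 'M[R]_n) (F1 F2 Q1 Q2 : 'M[R]_m)
  (tp : R) (Ds2 : set 'rV[R]_n)
  (f : R -> 'rV[R]_n -> 'rV[R]_m) (Df : R -> 'rV[R]_n -> 'M[R]_(n, m)) :
  direct_decomp4 S1 S2 P1 P2 ->
  direct_decomp4 F1 F2 Q1 Q2 ->
  Ds2 `<=` range_proj S2 ->
  {within [set p : R * 'rV[R]_n | tp <= p.1],
     continuous (fun p : R * 'rV[R]_n => f p.1 p.2)} ->
  is_partial_deriv_x tp f Df ->
  {within [set p : R * 'rV[R]_n | tp <= p.1],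
     continuous (fun p : R * 'rV[R]_n => Df p.1 p.2)} ->
  (forall (ts : R) (xs : 'rV[R]_n),
     tp <= ts -> (xs *m B - f ts xs) *m (F2 + Q2) = 0 -> Ds2 (xs *m S2) ->
     invertible_between P2 Q2 (P2 *m (Df ts xs *m Q2 - B))) ->
  loc_lipschitz_x tp f /\
  (forall (ts : R) (xs : 'rV[R]_n),
     tp <= ts -> (xs *m B - f ts xs) *m (F2 + Q2) = 0 -> Ds2 (xs *m S2) ->
     let Phi := P2 *m (Df ts xs *m Q2 - B) in
     let Psi t (xs1 xs2 xp1 xp2 : 'rV[R]_n) :=
       f t (xs1 + xs2 + xp1 + xp2) *m Q2 - xp2 *m B in
     invertible_between P2 Q2 Phi /\
     exists (d0 e0 : R) (c : R -> R -> R),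
       [/\ 0 < d0, 0 < e0,
        (forall d e : R, 0 < d -> d <= d0 -> 0 < e -> e <= e0 ->
         forall (t : R) (xs1 xs2 xp1 y1 y2 : 'rV[R]_n),
           tp <= t -> `|t - ts| <= d ->
           range_proj S1 xs1 -> `|xs1 - xs *m S1| <= d ->
           range_proj S2 xs2 -> Ds2 xs2 -> `|xs2 - xs *m S2| <= d ->
           range_proj P1 xp1 -> `|xp1 - xs *m P1| <= d ->
           range_proj P2 y1 -> `|y1 - xs *m P2| < e ->
           range_proj P2 y2 -> `|y2 - xs *m P2| < e ->
           `|Psi t xs1 xs2 xp1 y1 - Psi t xs1 xs2 xp1 y2 - (y1 - y2) *m Phi|
             <= c d e * `|y1 - y2|) &
        exists l : R, l < (inv_opnorm P2 Phi)^-1 /\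
          (forall eta : R, 0 < eta -> exists r : R, 0 < r /\
             forall d e : R, 0 < d -> d < r -> 0 < e -> e < r ->
               `|c d e - l| < eta)]).
Proof.
move=> [dsum _ _] [_ [_ _ _ QQ] _] _ _ pd Dfc inv.
pose DF := fun p : R * 'rV[R]_n => Df p.1 p.2.
split.
  move=> t0 x0 ht0.
  have [del del0 H] := cont_eps Dfc (p := (t0, x0)) ht0 ltr01.
  exists del; split => //.
  exists (n%:R * (`|Df t0 x0| + 1)) => t x1 x2 ht h0 h1 h2.
  have := @mvt_bound R n m (f t) (Df t) 0 x1 x2 (`|Df t0 x0| + 1).
  rewrite mulmx0 subr0; apply.
  - by move=> s _; apply: pd.
  - by rewrite addr_ge0.
  move=> s s01; rewrite subr0.
  have hs := convex_ball s01 h1 h2.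
  have := H t (x2 + s *: (x1 - x2)) ht h0 hs; rewrite /= => hlt.
  rewrite -[X in `|X|](subrK (Df t0 x0)).
  apply: (le_trans (ler_normD _ _)); rewrite addrC lerD2l; exact: ltW.
move=> ts xs hts hL hD Phi Psi.
have Hinv := inv ts xs hts hL hD.
split => //.
case: (inv_cases QQ Hinv) => [pos | [z0 triv]]; last first.
  exists 1, 1, (fun _ _ => -1); split => //.
    move=> d e _ _ _ _ t xs1 xs2 xp1 y1 y2 _ _ _ _ _ _ _ _ _ y1P _ y2P _.
    by rewrite (triv y1 y1P) (triv y2 y2P) !subrr mul0mx subrr !normr0 mulr0.
  exists (-1); split; first by rewrite z0 invr0 ltrN10.
  by move=> eta eta0; exists 1; split => // *; rewrite subrr normr0.
have [del1 del10 H1] := cont_eps Dfc (p := (ts, xs)) hts ltr01.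
have H1' : forall t x, tp <= t -> `|t - ts| < del1 -> `|x - xs| < del1 ->
    `|Df t x - Df ts xs| < 1 by move=> t x a b c; exact: H1.
pose E rho := [set y : R | exists t x, [/\ tp <= t, `|t - ts| <= rho,
   `|x - xs| <= rho & y = `|Df t x - Df ts xs|]].
pose om rho := sup (E rho).
have E0 rho : 0 <= rho -> E rho 0.
  by move=> r0; exists ts, xs; split; rewrite ?subrr ?normr0.
have omP rho K : 0 <= rho -> (forall t x, tp <= t -> `|t - ts| <= rho ->
    `|x - xs| <= rho -> `|Df t x - Df ts xs| <= K) ->
    (forall y, E rho y -> y <= om rho) /\ om rho <= K.
  move=> r0 HK; apply: sup_props; first by exists 0; exact: E0.
  by move=> _ [t [x [a b c ->]]]; exact: HK.
pose C := m%:R * `|Q2| * n%:R.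
have C0 : 0 <= C by rewrite !mulr_ge0.
have xsdec : xs = xs *m S1 + xs *m S2 + xs *m P1 + xs *m P2.
  by rewrite -!mulmxDr dsum mulmx1.
exists (del1 / 8), (del1 / 8), (fun d e => C * om (3 * d + e)).
split.
- by rewrite divr_gt0.
- by rewrite divr_gt0.
- move=> d e d0 dd0 e0 ee0 t xs1 xs2 xp1 y1 y2 ht htd _ h1 _ _ h2 _ h3 y1P hy1 y2P hy2.
  have rho0 : 0 <= 3 * d + e by lra.
  have rholt : 3 * d + e < del1 by lra.
  have [omge _] := omP (3 * d + e) 1 rho0
    (fun t x ht a b => ltW (H1' t x ht (le_lt_trans a rholt) (le_lt_trans b rholt))).
  have y1P' : y1 *m P2 = y1 := y1P.
  have y2P' : y2 *m P2 = y2 := y2P.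
  have eP : (y1 - y2) *m Phi = (y1 - y2) *m Df ts xs *m Q2 - (y1 - y2) *m B.
    by rewrite /Phi mulmxA mulmxBl y1P' y2P' mulmxBr mulmxA.
  have zz : (xs1 + xs2 + xp1 + y1) - (xs1 + xs2 + xp1 + y2) = y1 - y2.
    by rewrite opprD addrACA subrr add0r.
  have -> : Psi t xs1 xs2 xp1 y1 - Psi t xs1 xs2 xp1 y2 - (y1 - y2) *m Phi =
     (f t (xs1 + xs2 + xp1 + y1) - f t (xs1 + xs2 + xp1 + y2)
       - ((xs1 + xs2 + xp1 + y1) - (xs1 + xs2 + xp1 + y2)) *m Df ts xs) *m Q2.
    rewrite /Psi eP zz [RHS]mulmxBl [in RHS]mulmxBl [(y1 - y2) *m B]mulmxBl.
    exact: zid.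
  apply: (le_trans (mulmx_norm _ _)).
  have K0 : 0 <= om (3 * d + e) by apply: omge; exact: E0.
  have HK : forall s : R, 0 <= s <= 1 ->
      `|Df t (xs1 + xs2 + xp1 + y2 + s *: (xs1 + xs2 + xp1 + y1 - (xs1 + xs2 + xp1 + y2)))
        - Df ts xs| <= om (3 * d + e).
    move=> s s01; apply: omge; exists t, (xs1 + xs2 + xp1 + y2 +
       s *: (xs1 + xs2 + xp1 + y1 - (xs1 + xs2 + xp1 + y2))).
    split => //; first by lra.
    rewrite [X in `|_ - X|]xsdec decomp_id.
    have hc := ltW (convex_ball s01 hy1 hy2).
    apply: (le_trans (ler_normD _ _)).
    apply: (@le_trans _ _ (d + d + d + e)); last by lra.
    apply: lerD => //; apply: (le_trans (ler_normD _ _)); apply: lerD => //.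
    by apply: (le_trans (ler_normD _ _)); apply: lerD.
  have hv := @mvt_bound R n m (f t) (Df t) (Df ts xs) (xs1 + xs2 + xp1 + y1)
     (xs1 + xs2 + xp1 + y2) (om (3 * d + e)) (fun s _ => pd t _ ht) K0 HK.
  rewrite zz in hv.
  have hw := ler_wpM2r (normr_ge0 Q2) (ler_wpM2l (ler0n _ m) hv).
  rewrite zz; apply: le_trans hw _.
  by rewrite /C le_eqVlt; apply/orP; left; apply/eqP; ring.
- exists 0; split; first by rewrite invr_gt0.
  move=> eta eta0.
  pose eta' := eta / (C + 1).
  have C10 : 0 < C + 1 by lra.
  have eta'0 : 0 < eta' by rewrite divr_gt0.
  have [del2 del20 H2] := cont_eps Dfc (p := (ts, xs)) hts eta'0.
  have H2' : forall t x, tp <= t -> `|t - ts| < del2 -> `|x - xs| < del2 ->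
    `|Df t x - Df ts xs| < eta' by move=> t x a b c; exact: H2.
  exists (del2 / 4); split; first by rewrite divr_gt0.
  move=> d e d0 dr e0 er.
  have rho0 : 0 <= 3 * d + e by lra.
  have rholt : 3 * d + e < del2 by lra.
  have [omge omle] := omP (3 * d + e) eta' rho0
    (fun t x ht a b => ltW (H2' t x ht (le_lt_trans a rholt) (le_lt_trans b rholt))).
  have om0 : 0 <= om (3 * d + e) by apply: omge; exact: E0.
  rewrite subr0 ger0_norm ?mulr_ge0 //.
  apply: (le_lt_trans (ler_wpM2l C0 omle)).
  rewrite /eta' mulrA ltr_pdivrMr //.
  nra.
Qed.
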